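(* Let $C,D$ be category presentations. The uncurrying functor $\overline{(-)}:\mathbf{Curr}(C,D)\to\mathbf{UnCurr}(C,D)$ takes values in curryable profunctor presentations and rightward morphisms. Its corestriction $\overline{(-)}:\mathbf{Curr}(C,D)\to\mathbf{Crble}(C,D)$ is an equivalence of categories, and when $C,D$ are finite so is its restriction $\overline{(-)}:\mathbf{FinCurr}(C,D)\to\mathbf{FinCrble}(C,D)$; both preserve and reflect provable equality of morphisms (i.e. $F\approx G$ iff $\overline F\approx\overline G$).
   Context: Category presentations $C$: sorts, function symbols $f:c\to c'$, equations $C_E$ between parallel paths; finite if all these sets are finite; provable equality is the smallest equivalence relation on paths containing the equations and closed under concatenation with composable function symbols. Uncurried presentations $P:C\nrightarrow D$: a set $\mathrm{Fun}(P)$ of symbols $x:c\to d$ ($c$ a $C$-sort, $d$ a $D$-sort) and a set $P_E$ of equations between cross-paths (paths from a $C$-sort to a $D$-sort) of the category presentation $|P|$ with sorts $\mathrm{Sort}(C)+\mathrm{Sort}(D)$, symbols $\mathrm{Fun}(C)+\mathrm{Fun}(P)+\mathrm{Fun}(D)$, equations $C_E+P_E+D_E$; $\approx_P$ is provable equality of $|P|$ restricted to cross-paths. Morphisms $F:P\to P'$ send each $x:c\to d$ to a cross-path $F(x):c\to d$ of $P'$ such that the extension acting as identity on $C$ and $D$ maps every equation of $|P|$ to a provable equality of $|P'|$; composition by substitution; category $\mathbf{UnCurr}(C,D)$; $F\approx F'$ iff $F(x)\approx_{P'}F'(x)$ for all $x$. A short left cross-path is $f.p$ with $f\in\mathrm{Fun}(C)$,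 $p\in\mathrm{Fun}(P)$; a right cross-path is $p.g$ with $p\in\mathrm{Fun}(P)$, $g$ a $D$-path. For a $C$-sort $c$, $P^c$ is the $D$-instance presentation with generators the symbols $p:c\to d$ of $P$ and equations those of $P_E$ with source $c$. $P$ is nongenerative if every short left cross-path is $\approx_P$-equal to a right cross-path, conservative if right cross-paths $t,t'$ from $c$ with $t\approx_P t'$ satisfy $t\approx_{P^c}t'$, and curryable if both. A morphism is rightward if it sends each symbol to a right cross-path. $\mathbf{Crble}(C,D)$ is the (non-full) subcategory of $\mathbf{UnCurr}(C,D)$ with curryable objects and rightward morphisms; $\mathbf{FinCrble}(C,D)$ its full subcategory on presentations with $\mathrm{Fun}(P)$, $P_E$ finite. Instance presentations: a $D$-instance presentation $I$ has generators $x:d$ and equations between terms $x.g$; $\approx_I$ is the smallest equivalence relation on terms containing $I_E$, closed under right concatenation with $D$-function symbols, identifying $t.g,t.g'$ for equations $g=g'$ of $D_E$. Morphisms $F:I\to J$ send generators $x:d$ to terms $F(x):d$ respecting equations up to $\approx_J$; $F(x.g):=F(x).g$; $F\approx G$ iff $F(x)\approx_J G(x)$. Curried presentations $P:C\nrightarrow D$: $D$-instance presentations $P(c)$ and $D$-instance morphisms $P(f):P(c')\to P(c)$ for $f:c\to c'$, with $P(p)\approx P(p')$ for equations $p=p'$ of $C_E$ ($P(f_1.\cdots.f_n):=P(f_n)\circ\cdots\circ P(f_1)$). Morphisms: families $F_c:P(c)\to P'(c)$ with $F_c\circ P(f)\approx P'(f)\circ F_{c'}$; $\mathbf{Curr}(C,D)$;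 $F\approx G$ iff all $F_c\approx G_c$; $\mathbf{FinCurr}(C,D)$ the full subcategory with all $P(c)$ finite. Uncurrying: $\overline P$ has a symbol $\overline p:c\to d$ for each $C$-sort $c$ and generator $p:d$ of $P(c)$; $\overline{p.g}:=\overline p.g$; equations $\overline t=\overline{t'}$ for each equation $t=t'$ of each $P(c)$, and $f.\overline p=\overline{P(f)(p)}$ for each $f:c\to c'$ in $\mathrm{Fun}(C)$ and generator $p$ of $P(c')$. On morphisms $\overline F(\overline p):=\overline{F_c(p)}$. *)

(* Defs.v *)
From Stdlib Require Import List.

Record csig := { Sort : Type; Fun : Type; src : Fun -> Sort; tgt : Fun -> Sort }.

(* typed paths, written in diagrammatic order: tcons f p = f.p *)
Inductive tpath (S : csig) : Sort S -> Sort S -> Type :=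
| tnil : forall a, tpath S a a
| tcons : forall (f : Fun S) b, tpath S (tgt S f) b -> tpath S (src S f) b.
Arguments tnil {S} a.
Arguments tcons {S} f {b} _.

Definition tsing {S : csig} (f : Fun S) : tpath S (src S f) (tgt S f) :=
  tcons f (tnil (tgt S f)).

Fixpoint tapp {S : csig} {a b c : Sort S} (p : tpath S a b) : tpath S b c -> tpath S a c :=
  match p in tpath _ a b return tpath S b c -> tpath S a c with
  | tnil _ => fun q => q
  | tcons f p' => fun q => tcons f (tapp p' q)
  end.

Record catpres := {
  csig_of :> csig;
  Eqn : Type;
  esrc : Eqn -> Sort csig_of;
  etgt : Eqn -> Sort csig_of;
  elhs : forall e, tpath csig_of (esrc e) (etgt e);
  erhs : forall e, tpath csig_of (esrc e) (etgt e) }.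

Inductive peq (C : catpres) : forall a b : Sort C, tpath C a b -> tpath C a b -> Prop :=
| peq_eqn : forall e, peq C _ _ (elhs C e) (erhs C e)
| peq_refl : forall a b (p : tpath C a b), peq C a b p p
| peq_sym : forall a b (p q : tpath C a b), peq C a b p q -> peq C a b q p
| peq_trans : forall a b (p q r : tpath C a b),
    peq C a b p q -> peq C a b q r -> peq C a b p r
| peq_pre : forall (f : Fun C) b (p q : tpath C (tgt C f) b),
    peq C _ b p q -> peq C _ b (tcons f p) (tcons f q)
| peq_post : forall (f : Fun C) a (p q : tpath C a (src C f)),
    peq C a _ p q -> peq C a _ (tapp p (tsing f)) (tapp q (tsing f)).
Arguments peq C {a b} _ _.

Definition finite_type (T : Type) : Prop := exists l : list T, forall x, In x l.

Definition finite_catpres (C : catpres) : Prop :=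
  finite_type (Sort C) /\ finite_type (Fun C) /\ finite_type (Eqn C).

(* a term x.g : d with x a generator and g a D-path *)
Definition term (D : csig) (G : Type) (gs : G -> Sort D) (d : Sort D) : Type :=
  { x : G & tpath D (gs x) d }.

Record instpres (D : catpres) := {
  IGen : Type;
  igs : IGen -> Sort D;
  IEqn : Type;
  iesort : IEqn -> Sort D;
  ilhs : forall e, term D IGen igs (iesort e);
  irhs : forall e, term D IGen igs (iesort e) }.
Arguments IGen {D} _.
Arguments igs {D} _ _.
Arguments IEqn {D} _.
Arguments iesort {D} _ _.
Arguments ilhs {D} _ _.
Arguments irhs {D} _ _.

Definition iterm {D : catpres} (I : instpres D) (d : Sort D) : Type :=
  term D (IGen I) (igs I) d.

Definition tconcat {D : catpres} {I : instpres D} {d d' : Sort D}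
  (t : iterm I d) (g : tpath D d d') : iterm I d' :=
  existT _ (projT1 t) (tapp (projT2 t) g).

Inductive ieq {D : catpres} (I : instpres D) : forall d : Sort D, iterm I d -> iterm I d -> Prop :=
| ieq_eqn : forall e, ieq I _ (ilhs I e) (irhs I e)
| ieq_refl : forall d (t : iterm I d), ieq I d t t
| ieq_sym : forall d (t u : iterm I d), ieq I d t u -> ieq I d u t
| ieq_trans : forall d (t u v : iterm I d), ieq I d t u -> ieq I d u v -> ieq I d t v
| ieq_post : forall (g : Fun D) (t u : iterm I (src D g)),
    ieq I _ t u -> ieq I _ (tconcat t (tsing g)) (tconcat u (tsing g))
| ieq_deq : forall (e : Eqn D) (t : iterm I (esrc D e)),
    ieq I _ (tconcat t (elhs D e)) (tconcat t (erhs D e)).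
Arguments ieq {D} I {d} _ _.

Definition instmor {D : catpres} (I J : instpres D) : Type :=
  forall x : IGen I, iterm J (igs I x).

Definition imap {D : catpres} {I J : instpres D} (F : instmor I J) {d : Sort D}
  (t : iterm I d) : iterm J d :=
  match t with existT _ x g => tconcat (F x) g end.

Definition instmor_valid {D : catpres} {I J : instpres D} (F : instmor I J) : Prop :=
  forall e : IEqn I, ieq J (imap F (ilhs I e)) (imap F (irhs I e)).

Definition instmor_eqv {D : catpres} {I J : instpres D} (F G : instmor I J) : Prop :=
  forall x : IGen I, ieq J (F x) (G x).

(* instmor_comp G F = G o F (first F, then G) *)
Definition instmor_comp {D : catpres} {I J K : instpres D}
  (G : instmor J K) (F : instmor I J) : instmor I K :=
  fun x => imap G (F x).

Definition instmor_id {D : catpres} (I : instpres D) : instmor I I :=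
  fun x => existT _ x (tnil (igs I x)).

Definition finite_inst {D : catpres} (I : instpres D) : Prop :=
  finite_type (IGen I) /\ finite_type (IEqn I).

Record curr (C D : catpres) := {
  Pc : Sort C -> instpres D;
  Pf : forall f : Fun C, instmor (Pc (tgt C f)) (Pc (src C f)) }.
Arguments Pc {C D} _ _.
Arguments Pf {C D} _ _.

Fixpoint Ppath {C D : catpres} (P : curr C D) {a b : Sort C} (p : tpath C a b)
  : instmor (Pc P b) (Pc P a) :=
  match p in tpath _ a b return instmor (Pc P b) (Pc P a) with
  | tnil a => instmor_id (Pc P a)
  | tcons f p' => instmor_comp (Pf P f) (Ppath P p')
  end.

Definition curr_valid {C D : catpres} (P : curr C D) : Prop :=
  (forall f : Fun C, instmor_valid (Pf P f)) /\
  (forall e : Eqn C, instmor_eqv (Ppath P (elhs C e)) (Ppath P (erhs C e))).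

Definition currmor {C D : catpres} (P P' : curr C D) : Type :=
  forall c : Sort C, instmor (Pc P c) (Pc P' c).

Definition currmor_valid {C D : catpres} {P P' : curr C D} (F : currmor P P') : Prop :=
  (forall c, instmor_valid (F c)) /\
  (forall f : Fun C,
     instmor_eqv (instmor_comp (F (src C f)) (Pf P f))
                 (instmor_comp (Pf P' f) (F (tgt C f)))).

Definition currmor_eqv {C D : catpres} {P P' : curr C D} (F G : currmor P P') : Prop :=
  forall c, instmor_eqv (F c) (G c).

Definition currmor_comp {C D : catpres} {P P' P'' : curr C D}
  (G : currmor P' P'') (F : currmor P P') : currmor P P'' :=
  fun c => instmor_comp (G c) (F c).

Definition currmor_id {C D : catpres} (P : curr C D) : currmor P P :=
  fun c => instmor_id (Pc P c).

Definition fin_curr {C D : catpres} (P : curr C D) : Prop :=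
  forall c, finite_inst (Pc P c).

Inductive tsort (C D : csig) := LS (c : Sort C) | RS (d : Sort D).
Arguments LS {C D} c.
Arguments RS {C D} d.

Inductive tsym (C D : csig) (X : Type) := SC (f : Fun C) | SP (x : X) | SD (g : Fun D).
Arguments SC {C D X} f.
Arguments SP {C D X} x.
Arguments SD {C D X} g.

Definition tsig (C D : csig) (X : Type) (xs : X -> Sort C) (xt : X -> Sort D) : csig :=
  {| Sort := tsort C D;
     Fun := tsym C D X;
     src := fun s => match s with
                     | SC f => LS (src C f) | SP x => LS (xs x) | SD g => RS (src D g) end;
     tgt := fun s => match s with
                     | SC f => LS (tgt C f) | SP x => RS (xt x) | SD g => RS (tgt D g) end |}.

Fixpoint liftC {C D : csig} {X : Type} {xs : X -> Sort C} {xt : X -> Sort D}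
  {a b : Sort C} (p : tpath C a b) : tpath (tsig C D X xs xt) (LS a) (LS b) :=
  match p in tpath _ a b return tpath (tsig C D X xs xt) (LS a) (LS b) with
  | tnil a => tnil (S := tsig C D X xs xt) (LS a)
  | tcons f p' => tcons (S := tsig C D X xs xt) (SC f) (liftC p')
  end.

Fixpoint liftD {C D : csig} {X : Type} {xs : X -> Sort C} {xt : X -> Sort D}
  {a b : Sort D} (p : tpath D a b) : tpath (tsig C D X xs xt) (RS a) (RS b) :=
  match p in tpath _ a b return tpath (tsig C D X xs xt) (RS a) (RS b) with
  | tnil a => tnil (S := tsig C D X xs xt) (RS a)
  | tcons f p' => tcons (S := tsig C D X xs xt) (SD f) (liftD p')
  end.

Record uncurr (C D : catpres) := {
  UFun : Type;
  usrc : UFun -> Sort C;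
  utgt : UFun -> Sort D;
  UEqn : Type;
  uesrc : UEqn -> Sort C;
  uetgt : UEqn -> Sort D;
  uelhs : forall e, tpath (tsig C D UFun usrc utgt) (LS (uesrc e)) (RS (uetgt e));
  uerhs : forall e, tpath (tsig C D UFun usrc utgt) (LS (uesrc e)) (RS (uetgt e)) }.
Arguments UFun {C D} _.
Arguments usrc {C D} _ _.
Arguments utgt {C D} _ _.
Arguments UEqn {C D} _.
Arguments uesrc {C D} _ _.
Arguments uetgt {C D} _ _.
Arguments uelhs {C D} _ _.
Arguments uerhs {C D} _ _.

Definition usig {C D : catpres} (P : uncurr C D) : csig :=
  tsig C D (UFun P) (usrc P) (utgt P).

Inductive teqn (C D : catpres) (E : Type) := TEC (e : Eqn C) | TEP (e : E) | TED (e : Eqn D).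
Arguments TEC {C D E} e.
Arguments TEP {C D E} e.
Arguments TED {C D E} e.

Definition total_esrc {C D : catpres} (P : uncurr C D) (e : teqn C D (UEqn P)) : tsort C D :=
  match e with TEC e => LS (esrc C e) | TEP e => LS (uesrc P e) | TED e => RS (esrc D e) end.
Definition total_etgt {C D : catpres} (P : uncurr C D) (e : teqn C D (UEqn P)) : tsort C D :=
  match e with TEC e => LS (etgt C e) | TEP e => RS (uetgt P e) | TED e => RS (etgt D e) end.
Definition total_elhs {C D : catpres} (P : uncurr C D) (e : teqn C D (UEqn P))
  : tpath (usig P) (total_esrc P e) (total_etgt P e) :=
  match e as e0 return tpath (usig P) (total_esrc P e0) (total_etgt P e0) with
  | TEC e => liftC (elhs C e) | TEP e => uelhs P e | TED e => liftD (elhs D e) end.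
Definition total_erhs {C D : catpres} (P : uncurr C D) (e : teqn C D (UEqn P))
  : tpath (usig P) (total_esrc P e) (total_etgt P e) :=
  match e as e0 return tpath (usig P) (total_esrc P e0) (total_etgt P e0) with
  | TEC e => liftC (erhs C e) | TEP e => uerhs P e | TED e => liftD (erhs D e) end.

Definition total {C D : catpres} (P : uncurr C D) : catpres :=
  {| csig_of := usig P; Eqn := teqn C D (UEqn P);
     esrc := total_esrc P; etgt := total_etgt P;
     elhs := total_elhs P; erhs := total_erhs P |}.

Definition upeq {C D : catpres} (P : uncurr C D) {c : Sort C} {d : Sort D}
  (t t' : tpath (usig P) (LS c) (RS d)) : Prop :=
  @peq (total P) (LS c) (RS d) t t'.

Definition umor {C D : catpres} (P P' : uncurr C D) : Type :=
  forall x : UFun P, tpath (usig P') (LS (usrc P x)) (RS (utgt P x)).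

Fixpoint uext {C D : catpres} {P P' : uncurr C D} (F : umor P P') {a b : tsort C D}
  (p : tpath (usig P) a b) : tpath (usig P') a b :=
  match p in tpath _ a b return tpath (usig P') a b with
  | tnil a => tnil (S := usig P') a
  | @tcons _ s b p' =>
      (match s as s0 return tpath (usig P') (@tgt (usig P) s0) b ->
                            tpath (usig P') (@src (usig P) s0) b with
       | SC f => fun q => tcons (S := usig P') (SC f) q
       | SP x => fun q => tapp (F x) q
       | SD g => fun q => tcons (S := usig P') (SD g) q
       end) (uext F p')
  end.

Definition umor_valid {C D : catpres} {P P' : uncurr C D} (F : umor P P') : Prop :=
  forall e : Eqn (total P),
    @peq (total P') _ _ (uext F (elhs (total P) e)) (uext F (erhs (total P) e)).

Definition umor_eqv {C D : catpres} {P P' : uncurr C D} (F G : umor P P') : Prop :=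
  forall x : UFun P, upeq P' (F x) (G x).

Definition umor_comp {C D : catpres} {P P' P'' : uncurr C D}
  (G : umor P' P'') (F : umor P P') : umor P P'' :=
  fun x => uext G (F x).

Definition umor_id {C D : catpres} (P : uncurr C D) : umor P P :=
  fun x => tsing (S := usig P) (SP x).

Inductive is_right {C D : catpres} (P : uncurr C D) : forall a b, tpath (usig P) a b -> Prop :=
| is_right_intro : forall (x : UFun P) (d : Sort D) (g : tpath D (utgt P x) d),
    is_right P _ _ (tcons (S := usig P) (SP x) (liftD g)).
Arguments is_right {C D} P {a b} _.

Inductive is_symP {C D : catpres} (P : uncurr C D) : forall a b, tpath (usig P) a b -> Prop :=
| is_symP_intro : forall x : UFun P, is_symP P _ _ (tsing (S := usig P) (SP x)).
Arguments is_symP {C D} P {a b} _.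

Definition rightward {C D : catpres} {P P' : uncurr C D} (F : umor P P') : Prop :=
  forall x, is_right P' (F x).

Definition nongenerative {C D : catpres} (P : uncurr C D) : Prop :=
  forall (f : Fun C) (d : Sort D) (q : tpath (usig P) (LS (tgt C f)) (RS d)),
    is_symP P q ->
    exists r : tpath (usig P) (LS (src C f)) (RS d),
      is_right P r /\ upeq P (tcons (S := usig P) (SC f) q) r.

Definition Pgen {C D : catpres} (P : uncurr C D) (c : Sort C) : Type :=
  { x : UFun P | usrc P x = c }.

Definition Pterm {C D : catpres} (P : uncurr C D) (c : Sort C) (d : Sort D) : Type :=
  { x : Pgen P c & tpath D (utgt P (proj1_sig x)) d }.

Definition emb {C D : catpres} (P : uncurr C D) {c : Sort C} {d : Sort D}
  (t : Pterm P c d) : tpath (usig P) (LS c) (RS d) :=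
  match t with
  | existT _ (exist _ x H) g =>
      match H in _ = c0 return tpath (usig P) (LS c0) (RS d) with
      | eq_refl => tcons (S := usig P) (SP x) (liftD g)
      end
  end.

Definition castL {C D : catpres} (P : uncurr C D) {c c' : Sort C} {d : Sort D}
  (H : c = c') (p : tpath (usig P) (LS c) (RS d)) : tpath (usig P) (LS c') (RS d) :=
  match H in _ = c0 return tpath (usig P) (LS c0) (RS d) with eq_refl => p end.

(* equations of P^c: the equations of P_E with source c (those whose two
   sides are right cross-paths, i.e. terms of P^c) *)
Definition PEqn {C D : catpres} (P : uncurr C D) (c : Sort C) : Type :=
  { e : UEqn P & { H : uesrc P e = c &
    { tl : Pterm P c (uetgt P e) & { tr : Pterm P c (uetgt P e) |
      emb P tl = castL P H (uelhs P e) /\ emb P tr = castL P H (uerhs P e) } } } }.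

Definition Pinst {C D : catpres} (P : uncurr C D) (c : Sort C) : instpres D :=
  {| IGen := Pgen P c;
     igs := fun x => utgt P (proj1_sig x);
     IEqn := PEqn P c;
     iesort := fun e => uetgt P (projT1 e);
     ilhs := fun e => projT1 (projT2 (projT2 e));
     irhs := fun e => proj1_sig (projT2 (projT2 (projT2 e))) |}.

Definition conservative {C D : catpres} (P : uncurr C D) : Prop :=
  forall (c : Sort C) (d : Sort D) (t t' : iterm (Pinst P c) d),
    upeq P (emb P t) (emb P t') -> ieq (Pinst P c) t t'.

Definition curryable {C D : catpres} (P : uncurr C D) : Prop :=
  nongenerative P /\ conservative P.

Definition fin_uncurr {C D : catpres} (P : uncurr C D) : Prop :=
  finite_type (UFun P) /\ finite_type (UEqn P).

Definition crble_iso {C D : catpres} (Q Q' : uncurr C D) : Prop :=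
  exists (F : umor Q Q') (G : umor Q' Q),
    umor_valid F /\ rightward F /\ umor_valid G /\ rightward G /\
    umor_eqv (umor_comp G F) (umor_id Q) /\ umor_eqv (umor_comp F G) (umor_id Q').

Definition ubar_fun {C D : catpres} (P : curr C D) : Type :=
  { c : Sort C & IGen (Pc P c) }.
Definition ubar_src {C D : catpres} (P : curr C D) (x : ubar_fun P) : Sort C := projT1 x.
Definition ubar_tgt {C D : catpres} (P : curr C D) (x : ubar_fun P) : Sort D :=
  igs (Pc P (projT1 x)) (projT2 x).

Definition ubar_sig {C D : catpres} (P : curr C D) : csig :=
  tsig C D (ubar_fun P) (ubar_src P) (ubar_tgt P).

Definition obar {C D : catpres} (P : curr C D) {c : Sort C} {d : Sort D}
  (t : iterm (Pc P c) d) : tpath (ubar_sig P) (LS c) (RS d) :=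
  match t with
  | existT _ p g => tcons (S := ubar_sig P) (SP (existT _ c p)) (liftD g)
  end.

Inductive ubar_eqn {C D : catpres} (P : curr C D) :=
| UEI (c : Sort C) (e : IEqn (Pc P c))
| UEA (f : Fun C) (p : IGen (Pc P (tgt C f))).
Arguments UEI {C D P} c e.
Arguments UEA {C D P} f p.

Definition ubar_esrc {C D : catpres} (P : curr C D) (e : ubar_eqn P) : Sort C :=
  match e with UEI c _ => c | UEA f _ => src C f end.
Definition ubar_etgt {C D : catpres} (P : curr C D) (e : ubar_eqn P) : Sort D :=
  match e with UEI c e => iesort (Pc P c) e | UEA f p => igs (Pc P (tgt C f)) p end.

(* equations tbar = t'bar for t = t' in P(c) *)
(* and f.pbar = (P(f)(p))bar                 *)
Definition ubar_elhs {C D : catpres} (P : curr C D) (e : ubar_eqn P)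
  : tpath (ubar_sig P) (LS (ubar_esrc P e)) (RS (ubar_etgt P e)) :=
  match e as e0 return tpath (ubar_sig P) (LS (ubar_esrc P e0)) (RS (ubar_etgt P e0)) with
  | UEI c e => obar P (ilhs (Pc P c) e)
  | UEA f p => tcons (S := ubar_sig P) (SC f)
                 (tsing (S := ubar_sig P) (SP (existT _ (tgt C f) p)))
  end.
Definition ubar_erhs {C D : catpres} (P : curr C D) (e : ubar_eqn P)
  : tpath (ubar_sig P) (LS (ubar_esrc P e)) (RS (ubar_etgt P e)) :=
  match e as e0 return tpath (ubar_sig P) (LS (ubar_esrc P e0)) (RS (ubar_etgt P e0)) with
  | UEI c e => obar P (irhs (Pc P c) e)
  | UEA f p => obar P (Pf P f p)
  end.

Definition Pbar {C D : catpres} (P : curr C D) : uncurr C D :=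
  {| UFun := ubar_fun P; usrc := ubar_src P; utgt := ubar_tgt P;
     UEqn := ubar_eqn P; uesrc := ubar_esrc P; uetgt := ubar_etgt P;
     uelhs := ubar_elhs P; uerhs := ubar_erhs P |}.

Definition Fbar {C D : catpres} {P P' : curr C D} (F : currmor P P') : umor (Pbar P) (Pbar P') :=
  fun x => match x as x0 return
             tpath (usig (Pbar P')) (LS (usrc (Pbar P) x0)) (RS (utgt (Pbar P) x0)) with
           | existT _ c p => obar P' (F c p)
           end.

(* Main.v *)
Require Import Defs.
From Stdlib Require Import List ClassicalEpsilon ProofIrrelevance Program.Equality.

Lemma tapp_nil_r (S : csig) a b (p : tpath S a b) : tapp p (tnil b) = p.
Proof. induction p; simpl; [reflexivity | rewrite IHp; reflexivity]. Qed.

Lemma tapp_assoc (S : csig) a b c d (p : tpath S a b) (q : tpath S b c) (r : tpath S c d) :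
  tapp (tapp p q) r = tapp p (tapp q r).
Proof. revert q r; induction p; intros; simpl; [reflexivity | rewrite IHp; reflexivity]. Qed.

Lemma peq_app_l (C : catpres) a b c (r : tpath C a b) (p q : tpath C b c) :
  peq C p q -> peq C (tapp r p) (tapp r q).
Proof. revert p q; induction r; intros p q H; simpl; [exact H | apply peq_pre; auto]. Qed.

Lemma peq_app_r (C : catpres) b c (r : tpath C b c) : forall a (p q : tpath C a b),
  peq C p q -> peq C (tapp p r) (tapp q r).
Proof.
  induction r as [b|f b r IH]; intros a p q H.
  - rewrite !tapp_nil_r; exact H.
  - assert (E : forall p0 : tpath C a (src C f), tapp p0 (tcons f r) = tapp (tapp p0 (tsing f)) r)
      by (intro p0; rewrite tapp_assoc; reflexivity).
    rewrite !E. apply IH. apply peq_post. exact H.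
Qed.

Lemma tconcat_nil (D : catpres) (I : instpres D) d (t : iterm I d) : tconcat t (tnil d) = t.
Proof. destruct t as [x g]; unfold tconcat; simpl; rewrite tapp_nil_r; reflexivity. Qed.

Lemma tconcat_tconcat (D : catpres) (I : instpres D) d d' d'' (t : iterm I d) (g : tpath D d d') (h : tpath D d' d'') :
  tconcat (tconcat t g) h = tconcat t (tapp g h).
Proof. destruct t as [x k]; unfold tconcat; simpl; rewrite tapp_assoc; reflexivity. Qed.

Lemma ieq_tconcat (D : catpres) (I : instpres D) d d' (g : tpath D d d') :
  forall (t u : iterm I d), ieq I t u -> ieq I (tconcat t g) (tconcat u g).
Proof.
  induction g as [d|f d' g IH]; intros t u H.
  - rewrite !tconcat_nil; exact H.
  - assert (E : forall v : iterm I (src D f), tconcat v (tcons f g) = tconcat (tconcat v (tsing f)) g)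
      by (intro v; rewrite tconcat_tconcat; reflexivity).
    rewrite !E. apply IH. apply ieq_post. exact H.
Qed.

Lemma peq_ieq (D : catpres) (I : instpres D) d d' (g g' : tpath D d d') :
  peq D g g' -> forall t : iterm I d, ieq I (tconcat t g) (tconcat t g').
Proof.
  induction 1 as [e|a b p|a b p q H IH|a b p q r H1 IH1 H2 IH2|f b p q H IH|f a p q H IH]; intro t.
  - apply ieq_deq.
  - apply ieq_refl.
  - apply ieq_sym, IH.
  - eapply ieq_trans; [apply IH1|apply IH2].
  - assert (E : forall v : tpath D (tgt D f) b, tconcat t (tcons f v) = tconcat (tconcat t (tsing f)) v)
      by (intro v; rewrite tconcat_tconcat; reflexivity).
    rewrite !E. apply IH.
  - rewrite <- !tconcat_tconcat. apply ieq_post, IH.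
Qed.

Lemma imap_tconcat (D : catpres) (I J : instpres D) (F : instmor I J) d d' (t : iterm I d) (g : tpath D d d') :
  imap F (tconcat t g) = tconcat (imap F t) g.
Proof. destruct t as [x h]; simpl. rewrite tconcat_tconcat. reflexivity. Qed.

Lemma imap_valid (D : catpres) (I J : instpres D) (F : instmor I J) :
  instmor_valid F -> forall d (t u : iterm I d), ieq I t u -> ieq J (imap F t) (imap F u).
Proof.
  intros HF d t u H; induction H.
  - apply HF.
  - apply ieq_refl.
  - apply ieq_sym; auto.
  - eapply ieq_trans; eauto.
  - rewrite !imap_tconcat. apply ieq_post; auto.
  - rewrite !imap_tconcat. apply ieq_deq.
Qed.

Lemma imap_eqv (D : catpres) (I J : instpres D) (F G : instmor I J) :
  instmor_eqv F G -> forall d (t : iterm I d), ieq J (imap F t) (imap G t).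
Proof. intros H d [x g]; simpl. apply ieq_tconcat, H. Qed.

Lemma imap_comp (D : catpres) (I J K : instpres D) (G : instmor J K) (F : instmor I J) d (t : iterm I d) :
  imap (instmor_comp G F) t = imap G (imap F t).
Proof. destruct t as [x g]; unfold instmor_comp; simpl. destruct (F x) as [y h]; simpl. rewrite tconcat_tconcat. reflexivity. Qed.

Lemma imap_id (D : catpres) (I : instpres D) d (t : iterm I d) : imap (instmor_id I) t = t.
Proof. destruct t as [x g]; reflexivity. Qed.

Lemma Ppath_app (C D : catpres) (P : curr C D) a b c (p : tpath C a b) (q : tpath C b c) x :
  Ppath P (tapp p q) x = imap (Ppath P p) (Ppath P q x).
Proof.
  revert q x; induction p as [a|f b p IH]; intros q x; simpl.
  - rewrite imap_id; reflexivity.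
  - unfold instmor_comp. rewrite IH. exact (eq_sym (imap_comp _ _ _ _ (Pf P f) (Ppath P p) _ _)).
Qed.

Lemma Ppath_peq (C D : catpres) (P : curr C D) : curr_valid P ->
  forall a b (p q : tpath C a b), peq C p q -> instmor_eqv (Ppath P p) (Ppath P q).
Proof.
  intros [HV HE] a b p q H; induction H; intro x.
  - apply HE.
  - apply ieq_refl.
  - apply ieq_sym, IHpeq.
  - eapply ieq_trans; [apply IHpeq1|apply IHpeq2].
  - simpl; unfold instmor_comp. apply imap_valid; auto.
  - rewrite !Ppath_app. apply imap_eqv; auto.
Qed.
Definition T {C D : catpres} (P : curr C D) (a b : tsort C D) : Type :=
  match a, b with
  | LS c, LS c' => tpath C c c'
  | LS c, RS d => iterm (Pc P c) d
  | RS d, RS d' => tpath D d d'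
  | RS _, LS _ => Empty_set
  end.

Definition step {C D : catpres} (P : curr C D) (s : Fun (ubar_sig P)) (b : tsort C D)
  : T P (tgt (ubar_sig P) s) b -> T P (src (ubar_sig P) s) b :=
  match s as s0 return T P (tgt (ubar_sig P) s0) b -> T P (src (ubar_sig P) s0) b with
  | SC f => match b as b0 return T P (LS (tgt C f)) b0 -> T P (LS (src C f)) b0 with
            | LS c' => fun t => tcons f t
            | RS d => fun t => imap (Pf P f) t
            end
  | SP x => match b as b0 return T P (RS (ubar_tgt P x)) b0 -> T P (LS (ubar_src P x)) b0 with
            | LS c' => fun t => match t with end
            | RS d => fun g => existT (fun y => tpath D (igs (Pc P (projT1 x)) y) d) (projT2 x) g
            end
  | SD g => match b as b0 return T P (RS (tgt D g)) b0 -> T P (RS (src D g)) b0 with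
            | LS c' => fun t => match t with end
            | RS d => fun t => tcons g t
            end
  end.

Definition Tid {C D : catpres} (P : curr C D) (a : tsort C D) : T P a a :=
  match a with LS c => tnil c | RS d => tnil d end.

Fixpoint sem {C D : catpres} (P : curr C D) {a b : tsort C D} (p : tpath (ubar_sig P) a b) : T P a b :=
  match p in tpath _ a0 b0 return T P a0 b0 with
  | tnil a0 => Tid P a0
  | tcons s p' => step P s _ (sem P p')
  end.

Definition comp {C D : catpres} (P : curr C D) (a b c : tsort C D) : T P a b -> T P b c -> T P a c :=
  match a as a0, b as b0, c as c0 return T P a0 b0 -> T P b0 c0 -> T P a0 c0 with
  | LS x, LS y, LS z => fun t u => tapp t u
  | LS x, LS y, RS z => fun t u => imap (Ppath P t) u
  | LS x, RS y, RS z => fun t u => tconcat t u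
  | RS x, RS y, RS z => fun t u => tapp t u
  | LS x, RS y, LS z => fun t u => match u with end
  | RS x, RS y, LS z => fun t u => match u with end
  | RS x, LS y, _ => fun t u => match t with end
  end.

Lemma comp_id_l (C D : catpres) (P : curr C D) a c (u : T P a c) : comp P a a c (Tid P a) u = u.
Proof.
  destruct a, c; simpl in *; try reflexivity; try (match type of u with Empty_set => destruct u end).
  apply imap_id.
Qed.

Lemma step_comp (C D : catpres) (P : curr C D) (s : Fun (ubar_sig P)) b c
  (t : T P (tgt (ubar_sig P) s) b) (u : T P b c) :
  step P s c (comp P _ b c t u) = comp P _ b c (step P s b t) u.
Proof.
  destruct s as [f|x|g]; destruct b, c; simpl in *; try reflexivity; try (match type of t with Empty_set => destruct t end); try (match type of u with Empty_set => destruct u end).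
  - exact (eq_sym (imap_comp _ _ _ _ (Pf P f) (Ppath P t) _ _)).
  - apply imap_tconcat.
Qed.

Lemma sem_app (C D : catpres) (P : curr C D) a b (p : tpath (ubar_sig P) a b) :
  forall c (q : tpath (ubar_sig P) b c), sem P (tapp p q) = comp P a b c (sem P p) (sem P q).
Proof.
  induction p as [a|s b p IH]; intros c q; simpl.
  - symmetry; apply comp_id_l.
  - rewrite IH. apply step_comp.
Qed.

Definition Rel {C D : catpres} (P : curr C D) (a b : tsort C D) : T P a b -> T P a b -> Prop :=
  match a as a0, b as b0 return T P a0 b0 -> T P a0 b0 -> Prop with
  | LS c, LS c' => fun t u => peq C t u
  | LS c, RS d => fun t u => ieq (Pc P c) t u
  | RS d, RS d' => fun t u => peq D t u
  | RS _, LS _ => fun _ _ => True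
  end.

Lemma Rel_refl (C D : catpres) (P : curr C D) a b (t : T P a b) : Rel P a b t t.
Proof. destruct a, b; simpl; constructor. Qed.
Lemma Rel_sym (C D : catpres) (P : curr C D) a b (t u : T P a b) : Rel P a b t u -> Rel P a b u t.
Proof. destruct a, b; simpl; intros; try exact I; auto using peq_sym, ieq_sym. Qed.
Lemma Rel_trans (C D : catpres) (P : curr C D) a b (t u v : T P a b) :
  Rel P a b t u -> Rel P a b u v -> Rel P a b t v.
Proof. destruct a, b; simpl; intros; try exact I; [eapply peq_trans|eapply ieq_trans|eapply peq_trans]; eauto. Qed.

Lemma step_Rel (C D : catpres) (P : curr C D) : curr_valid P ->
  forall (s : Fun (ubar_sig P)) b (t u : T P (tgt (ubar_sig P) s) b),
  Rel P _ b t u -> Rel P _ b (step P s b t) (step P s b u).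
Proof.
  intros HP s b t u H.
  destruct s as [f|x|g]; destruct b; simpl in *;
    try (match type of t with Empty_set => destruct t end).
  - apply peq_pre; exact H.
  - apply imap_valid; [apply (proj1 HP)| exact H].
  - exact (peq_ieq _ _ _ _ _ _ H (existT _ (projT2 x) (tnil _))).
  - apply peq_pre; exact H.
Qed.

Lemma comp_Rel_l (C D : catpres) (P : curr C D) : curr_valid P ->
  forall a b c (t t' : T P a b) (u : T P b c), Rel P a b t t' -> Rel P a c (comp P a b c t u) (comp P a b c t' u).
Proof.
  intros HP a b c t t' u H.
  destruct a, b, c; simpl in *;
    try (match type of t with Empty_set => destruct t end);
    try (match type of u with Empty_set => destruct u end); try exact I.
  - apply peq_app_r; exact H.
  - apply imap_eqv. apply (Ppath_peq _ _ P HP _ _ _ _ H).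
  - apply ieq_tconcat; exact H.
  - apply peq_app_r; exact H.
Qed.

Lemma sem_liftC (C D : catpres) (P : curr C D) a b (p : tpath C a b) :
  sem P (liftC (X := ubar_fun P) (xs := ubar_src P) (xt := ubar_tgt P) p) = p.
Proof. induction p; simpl; [reflexivity| rewrite IHp; reflexivity]. Qed.

Lemma sem_liftD (C D : catpres) (P : curr C D) a b (p : tpath D a b) :
  sem P (liftD (X := ubar_fun P) (xs := ubar_src P) (xt := ubar_tgt P) p) = p.
Proof. induction p; simpl; [reflexivity| rewrite IHp; reflexivity]. Qed.

Lemma sem_obar (C D : catpres) (P : curr C D) c d (t : iterm (Pc P c) d) : sem P (obar P t) = t.
Proof. destruct t as [p g]; simpl. rewrite sem_liftD. reflexivity. Qed.

Lemma sem_peq (C D : catpres) (P : curr C D) : curr_valid P ->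
  forall a b (p q : tpath (usig (Pbar P)) a b), @peq (total (Pbar P)) a b p q -> Rel P a b (sem P p) (sem P q).
Proof.
  intros HP a b p q H; induction H.
  - destruct e as [e|[c e|f p]|e]; simpl.
    + rewrite !sem_liftC. apply peq_eqn.
    + rewrite !sem_obar. apply ieq_eqn.
    + rewrite sem_obar, tconcat_nil. apply ieq_refl.
    + rewrite !sem_liftD. apply peq_eqn.
  - apply Rel_refl.
  - apply Rel_sym; auto.
  - eapply Rel_trans; eauto.
  - simpl. apply step_Rel; auto.
  - rewrite !sem_app. apply comp_Rel_l; auto.
Qed.

Lemma liftD_app (C D : csig) X xs xt a b c (g : tpath D a b) (h : tpath D b c) :
  liftD (X:=X) (C:=C) (xs:=xs) (xt:=xt) (tapp g h) = tapp (liftD g) (liftD h).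
Proof. revert h; induction g; intros; simpl; [reflexivity | rewrite IHg; reflexivity]. Qed.

Lemma liftC_app (C D : csig) X xs xt a b c (g : tpath C a b) (h : tpath C b c) :
  liftC (X:=X) (D:=D) (xs:=xs) (xt:=xt) (tapp g h) = tapp (liftC g) (liftC h).
Proof. revert h; induction g; intros; simpl; [reflexivity | rewrite IHg; reflexivity]. Qed.

Lemma obar_tconcat (C D : catpres) (P : curr C D) c d d' (t : iterm (Pc P c) d) (g : tpath D d d') :
  obar P (tconcat t g) = tapp (obar P t) (liftD g).
Proof. destruct t as [p h]; simpl. rewrite liftD_app. reflexivity. Qed.

Lemma obar_Pf (C D : catpres) (P : curr C D) (f : Fun C) d (u : iterm (Pc P (tgt C f)) d) :
  upeq (Pbar P) (tcons (S := usig (Pbar P)) (SC f) (obar P u)) (obar P (imap (Pf P f) u)).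
Proof.
  destruct u as [p g]. unfold upeq.
  change (obar P (imap (Pf P f) (existT _ p g))) with (obar P (tconcat (Pf P f p) g)).
  rewrite obar_tconcat.
  change (tcons (S := usig (Pbar P)) (SC f) (obar P (existT _ p g)))
    with (tapp (ubar_elhs P (UEA f p)) (liftD (X := ubar_fun P) (xs := ubar_src P) (xt := ubar_tgt P) g)).
  apply peq_app_r.
  exact (peq_eqn (total (Pbar P)) (TEP (UEA f p))).
Qed.

Lemma obar_peq (C D : catpres) (P : curr C D) c d (u v : iterm (Pc P c) d) :
  ieq (Pc P c) u v -> upeq (Pbar P) (obar P u) (obar P v).
Proof.
  unfold upeq; induction 1.
  - exact (peq_eqn (total (Pbar P)) (TEP (UEI c e))).
  - apply peq_refl.
  - apply peq_sym; auto.
  - eapply peq_trans; eauto.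
  - rewrite !obar_tconcat. apply peq_app_r. exact IHieq.
  - rewrite !obar_tconcat. apply peq_app_l.
    exact (peq_eqn (total (Pbar P)) (TED e)).
Qed.

Definition NF {C D : catpres} (P : curr C D) (a b : tsort C D) : tpath (ubar_sig P) a b -> T P a b -> Prop :=
  match a as a0, b as b0 return tpath (ubar_sig P) a0 b0 -> T P a0 b0 -> Prop with
  | LS c, LS c' => fun r t => r = liftC t
  | LS c, RS d => fun r t => upeq (Pbar P) r (obar P t)
  | RS d, RS d' => fun r t => r = liftD t
  | RS _, LS _ => fun _ _ => True
  end.

Lemma norm_sem (C D : catpres) (P : curr C D) a b (r : tpath (ubar_sig P) a b) : NF P a b r (sem P r).
Proof.
  induction r as [a|s b r IH].
  - destruct a; reflexivity.
  - simpl. revert r IH. destruct s as [f|x|g]; destruct b; intros r IH; simpl in *.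
    + etransitivity; [apply f_equal; exact IH| reflexivity].
    + eapply peq_trans; [exact (peq_pre (total (Pbar P)) (SC f) _ _ _ IH)| apply obar_Pf].
    + destruct (sem P r).
    + destruct x as [c p]. simpl in *. unfold upeq. rewrite IH at 1. apply peq_refl.
    + destruct (sem P r).
    + etransitivity; [apply f_equal; exact IH| reflexivity].
Qed.

Definition tr {C D : catpres} (P : curr C D) {c : Sort C} {d : Sort D} (u : iterm (Pc P c) d)
  : iterm (Pinst (Pbar P) c) d :=
  match u with
  | existT _ p g => existT (fun x : Pgen (Pbar P) c => tpath D (utgt (Pbar P) (proj1_sig x)) d)
                      (exist (fun x : ubar_fun P => ubar_src P x = c) (existT _ c p) eq_refl) g
  end.

Lemma tr_tconcat (C D : catpres) (P : curr C D) c d d' (u : iterm (Pc P c) d) (g : tpath D d d') :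
  tr P (tconcat u g) = tconcat (tr P u) g.
Proof. destruct u; reflexivity. Qed.

Lemma emb_tr (C D : catpres) (P : curr C D) c d (u : iterm (Pc P c) d) :
  emb (Pbar P) (tr P u) = obar P u.
Proof. destruct u; reflexivity. Qed.

Lemma tr_ieq (C D : catpres) (P : curr C D) c d (u v : iterm (Pc P c) d) :
  ieq (Pc P c) u v -> ieq (Pinst (Pbar P) c) (tr P u) (tr P v).
Proof.
  induction 1.
  - pose (E := existT _ (UEI (P := P) c e) (existT _ eq_refl (existT _ (tr P (ilhs (Pc P c) e))
                 (exist _ (tr P (irhs (Pc P c) e)) (conj (emb_tr _ _ _ _ _ _) (emb_tr _ _ _ _ _ _)))))
             : PEqn (Pbar P) c).
    exact (ieq_eqn (Pinst (Pbar P) c) E).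
  - apply ieq_refl.
  - apply ieq_sym; auto.
  - eapply ieq_trans; eauto.
  - rewrite !tr_tconcat. apply ieq_post; auto.
  - rewrite !tr_tconcat. apply ieq_deq.
Qed.

Lemma tr_sem_emb (C D : catpres) (P : curr C D) c d (t : iterm (Pinst (Pbar P) c) d) :
  tr P (sem P (emb (Pbar P) t)) = t.
Proof.
  destruct t as [[[c0 p] Hx] g]. simpl in Hx. subst c. simpl.
  rewrite sem_liftD. reflexivity.
Qed.

Lemma Pbar_curryable (C D : catpres) (P : curr C D) : curr_valid P -> curryable (Pbar P).
Proof.
  intro HP; split.
  - intros f d q _. exists (obar P (sem P (tcons (S := usig (Pbar P)) (SC f) q))). split.
    + destruct (sem P (tcons (S := usig (Pbar P)) (SC f) q)) as [p g].
      exact (is_right_intro (Pbar P) (existT _ (src C f) p) d g).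
    + exact (norm_sem C D P _ _ (tcons (S := usig (Pbar P)) (SC f) q)).
  - intros c d t t' H.
    rewrite <- (tr_sem_emb C D P c d t), <- (tr_sem_emb C D P c d t').
    apply tr_ieq. exact (sem_peq C D P HP _ _ _ _ H).
Qed.

Lemma uext_liftC (C D : catpres) (P P' : uncurr C D) (F : umor P P') a b (p : tpath C a b) :
  uext F (liftC (X := UFun P) (xs := usrc P) (xt := utgt P) p) = liftC p.
Proof. induction p; simpl; [reflexivity| rewrite IHp; reflexivity]. Qed.

Lemma uext_liftD (C D : catpres) (P P' : uncurr C D) (F : umor P P') a b (p : tpath D a b) :
  uext F (liftD (X := UFun P) (xs := usrc P) (xt := utgt P) p) = liftD p.
Proof. induction p; simpl; [reflexivity| rewrite IHp; reflexivity]. Qed.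

Lemma uext_obar (C D : catpres) (P P' : curr C D) (F : currmor P P') c d (u : iterm (Pc P c) d) :
  uext (Fbar F) (obar P u) = obar P' (imap (F c) u).
Proof.
  destruct u as [p g].
  change (imap (F c) (existT _ p g)) with (tconcat (F c p) g).
  rewrite obar_tconcat.
  change (obar P (existT _ p g)) with (tcons (S:=usig (Pbar P)) (SP (existT _ c p)) (liftD (X:=ubar_fun P) (xs := ubar_src P) (xt := ubar_tgt P) g)).
  cbn [uext]. f_equal. exact (uext_liftD C D (Pbar P) (Pbar P') (Fbar F) _ _ g).
Qed.

Lemma Fbar_valid (C D : catpres) (P P' : curr C D) (F : currmor P P') :
  currmor_valid F -> umor_valid (Fbar F) /\ rightward (Fbar F).
Proof.
  intros [HF HN]; split.
  - intros [e|[c e|f p]|e]; simpl.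
    + rewrite !uext_liftC. exact (peq_eqn (total (Pbar P')) (TEC e)).
    + rewrite !uext_obar. apply obar_peq. apply HF.
    + rewrite uext_obar, tapp_nil_r.
      eapply peq_trans; [apply obar_Pf|].
      apply obar_peq. apply ieq_sym. apply (HN f p).
    + rewrite !uext_liftD. exact (peq_eqn (total (Pbar P')) (TED e)).
  - intros [c p]. simpl. destruct (F c p) as [q g].
    exact (is_right_intro (Pbar P') (existT _ c q) _ g).
Qed.

Lemma Fbar_id (C D : catpres) (P : curr C D) : umor_eqv (Fbar (currmor_id P)) (umor_id (Pbar P)).
Proof. intros [c p]. apply peq_refl. Qed.

Lemma Fbar_comp (C D : catpres) (P P' P'' : curr C D) (F : currmor P P') (G : currmor P' P'') :
  umor_eqv (Fbar (currmor_comp G F)) (umor_comp (Fbar G) (Fbar F)).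
Proof.
  intros [c p]. unfold umor_comp. simpl (Fbar F (existT _ c p)).
  rewrite uext_obar. apply peq_refl.
Qed.

Lemma Fbar_faithful (C D : catpres) (P P' : curr C D) (F G : currmor P P') :
  curr_valid P' -> (currmor_eqv F G <-> umor_eqv (Fbar F) (Fbar G)).
Proof.
  intro HP'; split.
  - intros H [c p]. apply obar_peq. apply H.
  - intros H c p. specialize (H (existT _ c p)).
    pose proof (sem_peq C D P' HP' _ _ _ _ H) as K. simpl in K.
    rewrite !sem_obar in K. exact K.
Qed.

Definition Ffull {C D : catpres} {P P' : curr C D} (H : umor (Pbar P) (Pbar P')) : currmor P P' :=
  fun c p => sem P' (H (existT _ c p)).

Lemma sem_uext_liftD (C D : catpres) (P P' : curr C D) (H : umor (Pbar P) (Pbar P')) a b (g : tpath D a b) :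
  sem P' (uext H (liftD (X := UFun (Pbar P)) (xs := usrc (Pbar P)) (xt := utgt (Pbar P)) g)) = g.
Proof. induction g; simpl. reflexivity. f_equal; exact IHg. Qed.

Lemma sem_uext_obar (C D : catpres) (P P' : curr C D) (H : umor (Pbar P) (Pbar P')) c d (u : iterm (Pc P c) d) :
  sem P' (uext H (obar P u)) = imap (Ffull H c) u.
Proof.
  destruct u as [p g].
  change (obar P (existT _ p g)) with (tcons (S:=usig (Pbar P)) (SP (existT _ c p)) (liftD (X:=ubar_fun P) (xs := ubar_src P) (xt := ubar_tgt P) g)).
  cbn [uext]. rewrite sem_app. simpl.
  change (imap (Ffull H c) (existT _ p g)) with (tconcat (Ffull H c p) g).
  f_equal. apply sem_uext_liftD.
Qed.

Lemma Fbar_full (C D : catpres) (P P' : curr C D) (H : umor (Pbar P) (Pbar P')) :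
  curr_valid P' -> umor_valid H -> exists F : currmor P P', currmor_valid F /\ umor_eqv (Fbar F) H.
Proof.
  intros HP' HV.
  exists (Ffull H). split; [split|].
  - intros c e. pose proof (sem_peq C D P' HP' _ _ _ _ (HV (TEP (UEI c e)))) as K.
    simpl in K. rewrite !sem_uext_obar in K. exact K.
  - intros f p. pose proof (sem_peq C D P' HP' _ _ _ _ (HV (TEP (UEA f p)))) as K.
    simpl in K. rewrite tapp_nil_r, sem_uext_obar in K. apply ieq_sym. exact K.
  - intros [c p]. apply peq_sym. exact (norm_sem C D P' _ _ (H (existT _ c p))).
Qed.

Lemma emb_tconcat (C D : catpres) (Q : uncurr C D) c d d' (t : iterm (Pinst Q c) d) (g : tpath D d d') :
  emb Q (tconcat t g) = tapp (emb Q t) (liftD g).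
Proof.
  destruct t as [[x Hx] h]. destruct Hx. simpl. rewrite liftD_app. reflexivity.
Qed.

Lemma symP_emb (C D : catpres) (Q : uncurr C D) c (x : Pgen Q c) :
  is_symP Q (emb Q (existT (fun y : Pgen Q c => tpath D (utgt Q (proj1_sig y)) (utgt Q (proj1_sig x))) x (tnil _))).
Proof. destruct x as [x0 Hx]. destruct Hx. exact (is_symP_intro Q x0). Qed.

Lemma right_emb_gen (C D : catpres) (Q : uncurr C D) a b (r : tpath (usig Q) a b) :
  is_right Q r ->
  match a as a0, b as b0 return tpath (usig Q) a0 b0 -> Prop with
  | LS c, RS d => fun r => exists t : Pterm Q c d, emb Q t = r
  | _, _ => fun _ => True
  end r.
Proof.
  destruct 1 as [x d g].
  exists (existT (fun y : Pgen Q (usrc Q x) => tpath D (utgt Q (proj1_sig y)) d)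
            (exist (fun y => usrc Q y = usrc Q x) x eq_refl) g).
  reflexivity.
Qed.

Lemma right_emb (C D : catpres) (Q : uncurr C D) c d (r : tpath (usig Q) (LS c) (RS d)) :
  is_right Q r -> exists t : Pterm Q c d, emb Q t = r.
Proof. intro H. exact (right_emb_gen C D Q _ _ r H). Qed.

Lemma Pf_spec (C D : catpres) (Q : uncurr C D) : nongenerative Q ->
  forall (f : Fun C) (x : Pgen Q (tgt C f)),
  exists t : iterm (Pinst Q (src C f)) (utgt Q (proj1_sig x)),
    upeq Q (tcons (S := usig Q) (SC f) (emb Q (existT (fun y : Pgen Q (tgt C f) => tpath D (utgt Q (proj1_sig y)) (utgt Q (proj1_sig x))) x (tnil _)))) (emb Q t).
Proof.
  intros NG f x.
  destruct (NG f _ _ (symP_emb C D Q _ x)) as [r [Hr Hpe]].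
  destruct (right_emb C D Q _ _ r Hr) as [t Ht].
  exists t. rewrite Ht. exact Hpe.
Qed.

Definition Pf0 {C D : catpres} (Q : uncurr C D) (NG : nongenerative Q) (f : Fun C)
  : instmor (Pinst Q (tgt C f)) (Pinst Q (src C f)) :=
  fun x => proj1_sig (constructive_indefinite_description _ (Pf_spec C D Q NG f x)).

Lemma Pf0_spec (C D : catpres) (Q : uncurr C D) (NG : nongenerative Q) (f : Fun C) (x : Pgen Q (tgt C f)) :
  upeq Q (tcons (S := usig Q) (SC f) (emb Q (existT (fun y : Pgen Q (tgt C f) => tpath D (utgt Q (proj1_sig y)) (utgt Q (proj1_sig x))) x (tnil _)))) (emb Q (Pf0 Q NG f x)).
Proof. unfold Pf0. exact (proj2_sig (constructive_indefinite_description _ (Pf_spec C D Q NG f x))). Qed.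

Definition PQ {C D : catpres} (Q : uncurr C D) (NG : nongenerative Q) : curr C D :=
  {| Pc := Pinst Q; Pf := Pf0 Q NG |}.

Lemma emb_Pf (C D : catpres) (Q : uncurr C D) (NG : nongenerative Q) (f : Fun C) d
  (u : iterm (Pinst Q (tgt C f)) d) :
  upeq Q (tcons (S := usig Q) (SC f) (emb Q u)) (emb Q (imap (Pf0 Q NG f) u)).
Proof.
  destruct u as [x g].
  change (imap (Pf0 Q NG f) (existT _ x g)) with (tconcat (Pf0 Q NG f x) g).
  rewrite emb_tconcat.
  change (existT _ x g) with (tconcat (I := Pinst Q (tgt C f)) (existT (fun y : Pgen Q (tgt C f) => tpath D (utgt Q (proj1_sig y)) (utgt Q (proj1_sig x))) x (tnil _)) g).
  rewrite emb_tconcat.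
  change (tcons (S := usig Q) (SC f) (tapp (emb Q (existT (fun y : Pgen Q (tgt C f) => tpath D (utgt Q (proj1_sig y)) (utgt Q (proj1_sig x))) x (tnil _))) (liftD g)))
    with (tapp (tcons (S := usig Q) (SC f) (emb Q (existT (fun y : Pgen Q (tgt C f) => tpath D (utgt Q (proj1_sig y)) (utgt Q (proj1_sig x))) x (tnil _)))) (liftD (X := UFun Q) (xs := usrc Q) (xt := utgt Q) g)).
  apply peq_app_r. apply Pf0_spec.
Qed.

Lemma emb_Ppath (C D : catpres) (Q : uncurr C D) (NG : nongenerative Q) a b (p : tpath C a b) (x : Pgen Q b) :
  upeq Q (tapp (liftC (X := UFun Q) (D := D) (xs := usrc Q) (xt := utgt Q) p)
                (emb Q (existT (fun y : Pgen Q b => tpath D (utgt Q (proj1_sig y)) (utgt Q (proj1_sig x))) x (tnil _))))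
         (emb Q (Ppath (PQ Q NG) p x)).
Proof.
  induction p as [a|f b p IH].
  - apply peq_refl.
  - simpl. eapply peq_trans.
    + exact (peq_pre (total Q) (SC f) _ _ _ (IH x)).
    + apply emb_Pf.
Qed.

Lemma castL_peq (C D : catpres) (Q : uncurr C D) c c' (H : c = c') d (p q : tpath (usig Q) (LS c) (RS d)) :
  upeq Q p q -> upeq Q (castL Q H p) (castL Q H q).
Proof. destruct H. auto. Qed.

Lemma PQ_valid (C D : catpres) (Q : uncurr C D) (CQ : curryable Q) :
  curr_valid (PQ Q (proj1 CQ)).
Proof.
  destruct CQ as [NG CV]. simpl. split.
  - intros f e. destruct e as [e0 [H [tl [tr [E1 E2]]]]]. simpl.
    apply CV. eapply peq_trans; [apply peq_sym; apply emb_Pf|].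
    eapply peq_trans; [|apply emb_Pf].
    refine (peq_pre (total Q) (SC f) _ _ _ _).
    change (upeq Q (emb Q tl) (emb Q tr)).
    rewrite E1, E2. apply castL_peq. exact (peq_eqn (total Q) (TEP e0)).
  - intros e x. apply CV.
    eapply peq_trans; [apply peq_sym; apply emb_Ppath|].
    eapply peq_trans; [|apply emb_Ppath].
    apply peq_app_r. exact (peq_eqn (total Q) (TEC e)).
Qed.

Definition FF {C D : catpres} (Q : uncurr C D) (NG : nongenerative Q) : umor Q (Pbar (PQ Q NG)) :=
  fun x => tsing (S := usig (Pbar (PQ Q NG)))
    (SP (existT (fun c => IGen (Pc (PQ Q NG) c)) (usrc Q x) (exist (fun y => usrc Q y = usrc Q x) x eq_refl))).

Definition GG {C D : catpres} (Q : uncurr C D) (NG : nongenerative Q) : umor (Pbar (PQ Q NG)) Q :=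
  fun y => match y as y0 return tpath (usig Q) (LS (usrc (Pbar (PQ Q NG)) y0)) (RS (utgt (Pbar (PQ Q NG)) y0)) with
           | existT _ c x => emb Q (existT (fun z : Pgen Q c => tpath D (utgt Q (proj1_sig z)) (utgt Q (proj1_sig x))) x (tnil _))
           end.

Definition NFQ {C D : catpres} (Q : uncurr C D) (NG : nongenerative Q) (a b : tsort C D)
  : tpath (usig Q) a b -> T (PQ Q NG) a b -> Prop :=
  match a as a0, b as b0 return tpath (usig Q) a0 b0 -> T (PQ Q NG) a0 b0 -> Prop with
  | LS c, LS c' => fun r t => r = liftC t
  | LS c, RS d => fun r t => upeq Q r (emb Q t)
  | RS d, RS d' => fun r t => r = liftD t
  | RS _, LS _ => fun _ _ => True
  end.

Lemma claim1 (C D : catpres) (Q : uncurr C D) (NG : nongenerative Q) a b (p : tpath (usig Q) a b) :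
  NFQ Q NG a b p (sem (PQ Q NG) (uext (FF Q NG) p)).
Proof.
  induction p as [a|s b p IH].
  - destruct a; reflexivity.
  - revert p IH. destruct s as [f|x|g]; destruct b; intros p IH; simpl in *.
    + etransitivity; [apply f_equal; exact IH| reflexivity].
    + eapply peq_trans; [exact (peq_pre (total Q) (SC f) _ _ _ IH)| apply emb_Pf].
    + destruct (sem (PQ Q NG) (uext (FF Q NG) p)).
    + unfold upeq. rewrite IH at 1. apply peq_refl.
    + destruct (sem (PQ Q NG) (uext (FF Q NG) p)).
    + etransitivity; [apply f_equal; exact IH| reflexivity].
Qed.

Lemma uext_GG_obar (C D : catpres) (Q : uncurr C D) (NG : nongenerative Q) c d (u : iterm (Pinst Q c) d) :
  uext (GG Q NG) (obar (PQ Q NG) u) = emb Q u.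
Proof.
  destruct u as [x g].
  change (obar (PQ Q NG) (existT _ x g)) with (tcons (S:=usig (Pbar (PQ Q NG))) (SP (existT _ c x)) (liftD (X:=ubar_fun (PQ Q NG)) (xs := ubar_src (PQ Q NG)) (xt := ubar_tgt (PQ Q NG)) g)).
  cbn [uext].
  transitivity (tapp (emb Q (existT (fun z : Pgen Q c => tpath D (utgt Q (proj1_sig z)) (utgt Q (proj1_sig x))) x (tnil _))) (liftD (X := UFun Q) (xs := usrc Q) (xt := utgt Q) g)).
  - f_equal. apply uext_liftD.
  - rewrite <- emb_tconcat. reflexivity.
Qed.


Lemma uext_liftC_peq (C D : catpres) (P P' : uncurr C D) (F : umor P P') a b (p q : tpath C a b) :
  @peq (total P') (LS a) (LS b) (liftC p) (liftC q) ->
  @peq (total P') (LS a) (LS b) (uext F (liftC (X := UFun P) (xs := usrc P) (xt := utgt P) p)) (uext F (liftC (X := UFun P) (xs := usrc P) (xt := utgt P) q)).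
Proof. rewrite !uext_liftC. auto. Qed.

Lemma uext_liftD_peq (C D : catpres) (P P' : uncurr C D) (F : umor P P') a b (p q : tpath D a b) :
  @peq (total P') (RS a) (RS b) (liftD p) (liftD q) ->
  @peq (total P') (RS a) (RS b) (uext F (liftD (X := UFun P) (xs := usrc P) (xt := utgt P) p)) (uext F (liftD (X := UFun P) (xs := usrc P) (xt := utgt P) q)).
Proof. rewrite !uext_liftD. auto. Qed.

Lemma GG_obar_peq (C D : catpres) (Q : uncurr C D) (NG : nongenerative Q) c d (u v : iterm (Pinst Q c) d) :
  upeq Q (emb Q u) (emb Q v) ->
  upeq Q (uext (GG Q NG) (obar (PQ Q NG) u)) (uext (GG Q NG) (obar (PQ Q NG) v)).
Proof. rewrite !uext_GG_obar. auto. Qed.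

Lemma GG_UEA (C D : catpres) (Q : uncurr C D) (NG : nongenerative Q) (f : Fun C) (x : IGen (Pc (PQ Q NG) (tgt C f))) :
  upeq Q (uext (GG Q NG) (ubar_elhs (PQ Q NG) (UEA f x))) (uext (GG Q NG) (ubar_erhs (PQ Q NG) (UEA f x))).
Proof.
  change (ubar_erhs (PQ Q NG) (UEA f x)) with (obar (PQ Q NG) (Pf0 Q NG f x)).
  rewrite uext_GG_obar.
  change (ubar_elhs (PQ Q NG) (UEA f x)) with
    (tcons (S := usig (Pbar (PQ Q NG))) (SC f) (tsing (S := usig (Pbar (PQ Q NG))) (SP (existT (fun c => IGen (Pc (PQ Q NG) c)) (tgt C f) x)))).
  cbn [uext tsing GG]. rewrite tapp_nil_r. apply Pf0_spec.
Qed.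
Lemma Q_iso (C D : catpres) (Q : uncurr C D) (NG : nongenerative Q) (CV : conservative Q) :
  crble_iso Q (Pbar (PQ Q NG)).
Proof.
  unfold crble_iso.
  exists (FF Q NG). exists (GG Q NG). split; [|split; [|split; [|split; [|split]]]].
  - intros [e|e|e]; cbn [elhs erhs total total_elhs total_erhs].
    + apply uext_liftC_peq. exact (peq_eqn (total (Pbar (PQ Q NG))) (TEC e)).
    + pose proof (claim1 C D Q NG _ _ (uelhs Q e)) as K1.
      pose proof (claim1 C D Q NG _ _ (uerhs Q e)) as K2. cbn [NFQ] in K1, K2.
      pose proof (norm_sem C D (PQ Q NG) _ _ (uext (FF Q NG) (uelhs Q e))) as N1.
      pose proof (norm_sem C D (PQ Q NG) _ _ (uext (FF Q NG) (uerhs Q e))) as N2. cbn [NF] in N1, N2.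
      eapply peq_trans; [exact N1|]. eapply peq_trans; [|apply peq_sym; exact N2].
      apply obar_peq. apply CV.
      eapply peq_trans; [apply peq_sym; exact K1|]. eapply peq_trans; [|exact K2].
      exact (peq_eqn (total Q) (TEP e)).
    + apply uext_liftD_peq. exact (peq_eqn (total (Pbar (PQ Q NG))) (TED e)).
  - intro x. exact (is_right_intro (Pbar (PQ Q NG)) (existT _ (usrc Q x) (exist (fun y => usrc Q y = usrc Q x) x eq_refl)) _ (tnil _)).
  - intros [e|[c e|f x]|e]; cbn [elhs erhs total total_elhs total_erhs Pbar uelhs uerhs].
    + apply uext_liftC_peq. exact (peq_eqn (total Q) (TEC e)).
    + apply GG_obar_peq.
      destruct e as [e0 [H [tl [tr [E1 E2]]]]]. cbn [ilhs irhs Pc PQ Pinst projT1 projT2 proj1_sig].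
      change (upeq Q (emb Q tl) (emb Q tr)).
      rewrite E1, E2. apply castL_peq. exact (peq_eqn (total Q) (TEP e0)).
    + apply GG_UEA.
    + apply uext_liftD_peq. exact (peq_eqn (total Q) (TED e)).
  - intros [c [x Hx]]. destruct Hx. exact (is_right_intro Q x _ (tnil _)).
  - intro x. unfold umor_comp, umor_id, FF. cbn [uext tsing GG emb tapp]. exact (peq_refl (total Q) _ _ (tsing (S:=usig Q) (SP x))).
  - intros [c [x Hx]]. destruct Hx. unfold umor_comp, umor_id, GG. cbn [emb uext tsing FF tapp liftD]. apply peq_refl.
Qed.

Fixpoint tolist {S : csig} {a b : Sort S} (p : tpath S a b) : list (Fun S) :=
  match p with tnil _ => nil | tcons f p' => f :: tolist p' end.

Lemma tolist_inj_sig (S : csig) a b (g : tpath S a b) :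
  forall a' (g' : tpath S a' b), tolist g = tolist g' ->
  existT (fun x => tpath S x b) a g = existT (fun x => tpath S x b) a' g'.
Proof.
  induction g as [a|f b g IH]; intros a' g' H.
  - destruct g' as [a''|f' b' g'].
    + reflexivity.
    + simpl in H. discriminate H.
  - destruct g' as [a''|f' b' g'].
    + simpl in H. discriminate H.
    + simpl in H. injection H as Hf Hl. subst f'.
      specialize (IH _ g' Hl).
      apply Eqdep.EqdepTheory.inj_pair2 in IH. subst g'. reflexivity.
Qed.

Lemma tolist_inj (S : csig) a b (g g' : tpath S a b) : tolist g = tolist g' -> g = g'.
Proof. intro H. exact (Eqdep.EqdepTheory.inj_pair2 _ _ _ _ _ (tolist_inj_sig S a b g a g' H)). Qed.

Lemma tolist_castL (C D : catpres) (Q : uncurr C D) c c' (H : c = c') d (p : tpath (usig Q) (LS c) (RS d)) :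
  tolist (castL Q H p) = tolist p.
Proof. destruct H. reflexivity. Qed.

Lemma tolist_liftD (C D : csig) X xs xt a b (g : tpath D a b) :
  tolist (liftD (C := C) (X := X) (xs := xs) (xt := xt) g) = map SD (tolist g).
Proof. induction g; simpl; [reflexivity| rewrite IHg; reflexivity]. Qed.

Lemma map_SD_inj (C D : csig) X (l l' : list (Fun D)) :
  map (SD (C := C) (X := X)) l = map SD l' -> l = l'.
Proof.
  revert l'; induction l as [|x l IH]; intros [|y l'] H; simpl in H; try discriminate; auto.
  injection H as H1 H2. subst. f_equal. auto.
Qed.

Lemma emb_inj (C D : catpres) (Q : uncurr C D) c d (t t' : Pterm Q c d) : emb Q t = emb Q t' -> t = t'.
Proof.
  destruct t as [[x Hx] g], t' as [[x' Hx'] g']. cbn [proj1_sig] in g, g'. intro H.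
  apply (f_equal tolist) in H.
  change (tolist (castL Q Hx (tcons (S := usig Q) (SP x) (liftD g))) = tolist (castL Q Hx' (tcons (S := usig Q) (SP x') (liftD g')))) in H.
  rewrite !tolist_castL in H. simpl in H.
  injection H as H1 H2. subst x'.
  assert (E : map (SD (C := C) (X := UFun Q)) (tolist g) = map SD (tolist g')).
  { rewrite <- (tolist_liftD C D (UFun Q) (usrc Q) (utgt Q)), <- (tolist_liftD C D (UFun Q) (usrc Q) (utgt Q)).
    exact H2. }
  clear H2. rename E into H2. apply map_SD_inj in H2.
  assert (Hx = Hx') by apply proof_irrelevance. subst Hx'.
  apply tolist_inj in H2. subst g'. reflexivity.
Qed.

Lemma fin_sigT (A : Type) (B : A -> Type) : finite_type A -> (forall a, finite_type (B a)) -> finite_type {a : A & B a}.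
Proof.
  intros [la Hla] HB.
  assert (K : forall l : list A, exists m, forall a, In a l -> forall b, In (existT B a b) m).
  { induction l as [|a l IH].
    - exists nil. intros a [].
    - destruct IH as [m Hm]. destruct (HB a) as [lb Hlb].
      exists (map (existT B a) lb ++ m). intros a' [E|Hin] b.
      + subst a'. apply in_or_app. left. apply in_map. apply Hlb.
      + apply in_or_app. right. apply Hm; auto. }
  destruct (K la) as [m Hm]. exists m. intros [a b]. apply Hm, Hla.
Qed.

Lemma fin_surj (A B : Type) (f : A -> B) : finite_type A -> (forall b, exists a, f a = b) -> finite_type B.
Proof.
  intros [la Hla] Hs. exists (map f la). intro b. destruct (Hs b) as [a Ha]. subst. apply in_map, Hla.
Qed.

Lemma fin_sum (A B : Type) : finite_type A -> finite_type B -> finite_type (A + B).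
Proof.
  intros [la Hla] [lb Hlb]. exists (map inl la ++ map inr lb).
  intros [a|b]; apply in_or_app; [left|right]; apply in_map; auto.
Qed.

Lemma fin_sig (A : Type) (P : A -> Prop) : finite_type A -> finite_type {x : A | P x}.
Proof.
  intros [la Hla].
  assert (K : forall l : list A, exists m, forall x (H : P x), In x l -> In (exist P x H) m).
  { induction l as [|a l IH].
    - exists nil. intros x H [].
    - destruct IH as [m Hm]. destruct (excluded_middle_informative (P a)) as [Ha|Ha].
      + exists (exist P a Ha :: m). intros x H [E|Hin].
        * subst. left. f_equal. apply proof_irrelevance.
        * right. auto.
      + exists m. intros x H [E|Hin].
        * subst. contradiction.
        * auto. }
  destruct (K la) as [m Hm]. exists m. intros [x H]. apply Hm, Hla.
Qed.

Lemma fin_subsingleton (T : Type) : (forall x y : T, x = y) -> finite_type T.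
Proof.
  intro H. destruct (Classical_Prop.classic (exists x : T, True)) as [[x _]|N].
  - exists (x :: nil). intro y. left. apply H.
  - exists nil. intro y. exfalso. apply N. exists y. exact I.
Qed.

Lemma Pbar_fin (C D : catpres) (P : curr C D) : finite_catpres C -> fin_curr P -> fin_uncurr (Pbar P).
Proof.
  intros HC HP. split.
  - apply (fin_sigT (Sort C) (fun c => IGen (Pc P c))); [exact (proj1 HC) | intro c; exact (proj1 (HP c))].
  - apply (fin_surj ({c : Sort C & IEqn (Pc P c)} + {f : Fun C & IGen (Pc P (tgt C f))}) (ubar_eqn P)
      (fun s => match s with inl (existT _ c e) => UEI c e | inr (existT _ f p) => UEA f p end)).
    + apply fin_sum.
      * apply fin_sigT; [exact (proj1 HC) | intro c; exact (proj2 (HP c))].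
      * apply fin_sigT; [exact (proj1 (proj2 HC)) | intro f; exact (proj1 (HP (tgt C f)))].
    + intros [c e|f p]; [exists (inl (existT _ c e))|exists (inr (existT _ f p))]; reflexivity.
Qed.

Lemma PQ_fin (C D : catpres) (Q : uncurr C D) (NG : nongenerative Q) : fin_uncurr Q -> fin_curr (PQ Q NG).
Proof.
  intros HQ c. split.
  - apply fin_sig. exact (proj1 HQ).
  - apply fin_sigT; [exact (proj2 HQ)|]. intro e. apply fin_subsingleton.
    intros [H [tl [tr Hp]]] [H' [tl' [tr' Hp']]].
    assert (H = H') by apply proof_irrelevance. subst H'.
    assert (tl = tl') by (apply emb_inj; rewrite (proj1 Hp), (proj1 Hp'); reflexivity). subst tl'.
    assert (tr = tr') by (apply emb_inj; rewrite (proj2 Hp), (proj2 Hp'); reflexivity). subst tr'.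
    assert (Hp = Hp') by apply proof_irrelevance. subst Hp'. reflexivity.
Qed.

Theorem mainTheorem15 (C D : catpres) :
  (* uncurrying lands in curryable presentations ... *)
  (forall P : curr C D, curr_valid P -> curryable (Pbar P)) /\
  (* ... and valid rightward morphisms *)
  (forall (P P' : curr C D) (F : currmor P P'),
     curr_valid P -> curr_valid P' -> currmor_valid F ->
     umor_valid (Fbar F) /\ rightward (Fbar F)) /\
  (* functoriality (up to provable equality) *)
  (forall P : curr C D, curr_valid P ->
     umor_eqv (Fbar (currmor_id P)) (umor_id (Pbar P))) /\
  (forall (P P' P'' : curr C D) (F : currmor P P') (G : currmor P' P''),
     curr_valid P -> curr_valid P' -> curr_valid P'' ->
     currmor_valid F -> currmor_valid G ->
     umor_eqv (Fbar (currmor_comp G F)) (umor_comp (Fbar G) (Fbar F))) /\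
  (* preserves and reflects provable equality of morphisms (faithful) *)
  (forall (P P' : curr C D) (F G : currmor P P'),
     curr_valid P -> curr_valid P' -> currmor_valid F -> currmor_valid G ->
     (currmor_eqv F G <-> umor_eqv (Fbar F) (Fbar G))) /\
  (* full onto Crble(C,D) *)
  (forall (P P' : curr C D) (H : umor (Pbar P) (Pbar P')),
     curr_valid P -> curr_valid P' -> umor_valid H -> rightward H ->
     exists F : currmor P P', currmor_valid F /\ umor_eqv (Fbar F) H) /\
  (* essentially surjective onto Crble(C,D) *)
  (forall Q : uncurr C D, curryable Q ->
     exists P : curr C D, curr_valid P /\ crble_iso Q (Pbar P)) /\
  (* finite case: FinCurr(C,D) -> FinCrble(C,D) is an equivalence *)
  (finite_catpres C -> finite_catpres D ->
     (forall P : curr C D, curr_valid P -> fin_curr P -> fin_uncurr (Pbar P)) /\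
     (forall Q : uncurr C D, curryable Q -> fin_uncurr Q ->
        exists P : curr C D, curr_valid P /\ fin_curr P /\ crble_iso Q (Pbar P))).
Proof.
  split; [|split; [|split; [|split; [|split; [|split; [|split]]]]]].
  - intros P HP. exact (Pbar_curryable C D P HP).
  - intros P P' F _ _ HF. exact (Fbar_valid C D P P' F HF).
  - intros P _. apply Fbar_id.
  - intros. apply Fbar_comp.
  - intros P P' F G _ HP' _ _. exact (Fbar_faithful C D P P' F G HP').
  - intros P P' H _ HP' HV _. exact (Fbar_full C D P P' H HP' HV).
  - intros Q CQ. exists (PQ Q (proj1 CQ)). split.
    + exact (PQ_valid C D Q CQ).
    + exact (Q_iso C D Q (proj1 CQ) (proj2 CQ)).
  - intros HC HD. split.
    + intros P _ HP. exact (Pbar_fin C D P HC HP).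
    + intros Q CQ HQ. exists (PQ Q (proj1 CQ)). split; [|split].
      * exact (PQ_valid C D Q CQ).
      * exact (PQ_fin C D Q (proj1 CQ) HQ).
      * exact (Q_iso C D Q (proj1 CQ) (proj2 CQ)).
Qed.
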